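(* Two pairs of increasing arithmetic progressions $(\alpha n+\beta,\ \gamma m+\delta)$ and $(\tilde\alpha n+\tilde\beta,\ \tilde\gamma m+\tilde\delta)$ (indices $n,m\in\mathbb N$) with irrational relative densities are topologically equivalent at $+\infty$ if and only if $$\frac{\alpha}{\gamma}=\frac{\tilde\alpha}{\tilde\gamma}\quad\text{and}\quad \frac{\beta-\delta}{\gamma}\equiv\frac{\tilde\beta-\tilde\delta}{\tilde\gamma}\pmod{\bigl(1,\tfrac{\alpha}{\gamma}\bigr)},$$ the latter meaning that the difference lies in the additive subgroup of $\mathbb R$ generated by $1$ and $\alpha/\gamma$.
   Context: For a pair of arithmetic progressions $(\alpha n+\beta,\ \gamma m+\delta)$ the relative density is $A=\alpha/\gamma$ and the normalized difference of the free terms is $\tau=(\beta-\delta)/\gamma$. Two pairs of sequences on the real line are topologically equivalent at $+\infty$ if there is a homeomorphism of the line defined in a neighborhood of $+\infty$ which maps the first sequence of the first pair to the first sequence of the second pair and the second sequence of the first pair to the second sequence of the second pair. *)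

(* Defs.v *)
From Stdlib Require Import Reals QArith.
Open Scope R_scope.

Definition AP (a b : R) (x : R) : Prop := exists n : nat, x = a * INR n + b.

(* Continuity at interior points of the open
   intervals is equivalent to continuity of the restrictions. *)
Definition homeo_at_infty (a b : R) (h g : R -> R) : Prop :=
  (forall x, a < x -> b < h x) /\
  (forall y, b < y -> a < g y) /\
  (forall x, a < x -> g (h x) = x) /\
  (forall y, b < y -> h (g y) = y) /\
  (forall x, a < x -> continuity_pt h x) /\
  (forall y, b < y -> continuity_pt g y).

Definition top_equiv_at_infty (X1 Y1 X2 Y2 : R -> Prop) : Prop :=
  exists (a b : R) (h g : R -> R),
    homeo_at_infty a b h g /\
    (forall x, a < x -> (X1 x <-> X2 (h x))) /\
    (forall x, a < x -> (Y1 x <-> Y2 (h x))).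

Definition irrational (r : R) : Prop := ~ exists q : Q, r = Q2R q.

Definition cong_mod_1A (A r s : R) : Prop :=
  exists k l : Z, r - s = IZR k + IZR l * A.

(* Main.v *)
Require Import Defs.
From Stdlib Require Import Reals QArith Lra Lia Ranalysis5.
Open Scope R_scope.

Lemma irr_comb A (hA : irrational A) (k l : Z) :
  IZR k + IZR l * A = 0 -> l = 0%Z /\ k = 0%Z.
Proof.
  intro H.
  destruct l as [|p|p].
  - split; auto. apply eq_IZR. lra.
  - exfalso. apply hA. exists (Qmake (- k) p). unfold Q2R; simpl.
    rewrite opp_IZR. assert (IZR (Z.pos p) > 0) by (apply IZR_lt; lia).
    field_simplify_eq; [lra | lra].
  - exfalso. apply hA. exists (Qmake k p). unfold Q2R; simpl.
    assert (IZR (Z.pos p) > 0) by (apply IZR_lt; lia).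
    replace (IZR (Z.neg p)) with (- IZR (Z.pos p)) in H by (rewrite <- opp_IZR; reflexivity).
    field_simplify_eq; [lra | lra].
Qed.

Lemma rem_ex (x b : R) : 0 < b -> exists m : Z, 0 <= x - IZR m * b < b.
Proof.
  intro hb. destruct (archimed (x / b)) as [h1 h2].
  exists (up (x/b) - 1)%Z. rewrite minus_IZR.
  assert (x = (x / b) * b) by (field; lra).
  split; nra.
Qed.

Lemma halve A (hA : irrational A) (k l : Z) :
  0 < IZR k + IZR l * A ->
  exists k' l' : Z, 0 < IZR k' + IZR l' * A <= (IZR k + IZR l * A) / 2.
Proof.
  set (b := IZR k + IZR l * A). intro hb.
  assert (Hr : exists k1 l1 : Z, 0 < IZR k1 + IZR l1 * A < b).
  { destruct (rem_ex 1 b hb) as [m1 Hm1].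
    destruct (rem_ex A b hb) as [m2 Hm2].
    destruct (Rle_lt_or_eq_dec 0 _ (proj1 Hm1)) as [P1|P1].
    - exists (1 - m1 * k)%Z, (- (m1 * l))%Z.
      rewrite minus_IZR, opp_IZR, !mult_IZR. unfold b in *. split; nra.
    - destruct (Rle_lt_or_eq_dec 0 _ (proj1 Hm2)) as [P2|P2].
      + exists (- (m2 * k))%Z, (1 - m2 * l)%Z.
        rewrite minus_IZR, opp_IZR, !mult_IZR. unfold b in *. split; nra.
      + exfalso.
        destruct (irr_comb A hA (1 - m1 * k) (- (m1 * l))) as [E1 E2].
        { rewrite minus_IZR, opp_IZR, !mult_IZR. unfold b in *. nra. }
        destruct (irr_comb A hA (- (m2 * k)) (1 - m2 * l)) as [E3 E4].
        { rewrite minus_IZR, opp_IZR, !mult_IZR. unfold b in *. nra. }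
        assert (m1 <> 0%Z) by lia.
        assert (l = 0%Z) by nia. subst l. lia. }
  destruct Hr as [k1 [l1 Hr]].
  destruct (Rle_lt_dec (IZR k1 + IZR l1 * A) (b/2)).
  - exists k1, l1. lra.
  - exists (k - k1)%Z, (l - l1)%Z. rewrite !minus_IZR. unfold b in *. lra.
Qed.

Lemma small_elt A (hA : irrational A) (n : nat) :
  exists k l : Z, 0 < IZR k + IZR l * A <= / INR (S n).
Proof.
  induction n as [|n IH].
  - exists 1%Z, 0%Z. simpl. lra.
  - destruct IH as [k [l [H1 H2]]].
    destruct (halve A hA k l H1) as [k' [l' [H3 H4]]].
    exists k', l'. split; auto.
    rewrite !S_INR. rewrite S_INR in H2.
    assert (0 <= INR n) by apply pos_INR.
    apply Rle_trans with (1 := H4).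
    assert (/ (INR n + 1) / 2 <= / (INR n + 1 + 1)).
    { apply Rmult_le_reg_r with (2 * (INR n + 1) * (INR n + 1 + 1)); [nra|].
      field_simplify; try lra. }
    lra.
Qed.

Lemma exists_nat_gt (x : R) : exists n : nat, x < INR n.
Proof.
  destruct (archimed x) as [h1 h2].
  exists (Z.to_nat (up x)).
  destruct (Z.le_gt_cases 0 (up x)).
  - rewrite INR_IZR_INZ, Znat.Z2Nat.id; [lra|lia].
  - assert (IZR (up x) < 0) by (apply IZR_lt; lia).
    pose proof (pos_INR (Z.to_nat (up x))). lra.
Qed.

Lemma step_up (t z : R) : 0 < t -> forall (n : nat) (w : R),
  w < z <= w + INR n * t -> exists s : nat, w + INR s * t < z <= w + INR (S s) * t.
Proof.
  intros ht n. induction n as [|n IH]; intros w [h1 h2].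
  - simpl in h2. lra.
  - destruct (Rle_lt_dec z (w + t)).
    + exists 0%nat. simpl. lra.
    + destruct (IH (w + t)) as [s Hs].
      { rewrite S_INR in h2. lra. }
      exists (S s). rewrite !S_INR in *. lra.
Qed.

Lemma step_down (t z : R) : 0 < t -> forall (n : nat) (w : R),
  w - INR n * t < z <= w -> exists s : nat, w - INR (S s) * t < z <= w - INR s * t.
Proof.
  intros ht n. induction n as [|n IH]; intros w [h1 h2].
  - simpl in h1. lra.
  - destruct (Rlt_le_dec (w - t) z).
    + exists 0%nat. simpl. lra.
    + destruct (IH (w - t)) as [s Hs].
      { rewrite S_INR in h1. lra. }
      exists (S s). rewrite !S_INR in *. lra.
Qed.

Lemma INR_Z (z : Z) : (0 <= z)%Z -> INR (Z.to_nat z) = IZR z.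
Proof. intro; rewrite INR_IZR_INZ, Znat.Z2Nat.id; auto. Qed.

Lemma dens A (hA : irrational A) (u d : R) : 0 < d ->
  exists (i : nat) (z : Z), A * INR i + u < IZR z <= A * INR i + u + d.
Proof.
  intro hd.
  destruct (exists_nat_gt (/ Rmin d (1/2))) as [n Hn].
  assert (Hm : 0 < Rmin d (1/2)) by (apply Rmin_glb_lt; lra).
  destruct (small_elt A hA n) as [k [l [H1 H2]]].
  set (th := IZR k + IZR l * A) in *.
  assert (Hth : th < Rmin d (1/2)).
  { assert (INR (S n) > / Rmin d (1/2)) by (rewrite S_INR; lra).
    assert (0 < / Rmin d (1/2)) by (apply Rinv_0_lt_compat; lra).
    apply Rle_lt_trans with (1 := H2).
    rewrite <- (Rinv_inv (Rmin d (1/2))).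
    apply Rinv_lt_contravar; [nra| lra]. }
  assert (Hd1 : th < d) by (pose proof (Rmin_l d (1/2)); lra).
  assert (Hd2 : th < 1/2) by (pose proof (Rmin_r d (1/2)); lra).
  assert (Hl : l <> 0%Z).
  { intro E. subst l. unfold th in *. rewrite Rmult_0_l, Rplus_0_r in *.
    assert (0 < k)%Z by (apply lt_IZR; lra).
    assert (Hk : (1 <= k)%Z) by lia. apply IZR_le in Hk. lra. }
  destruct (archimed u) as [a1 a2].
  destruct (exists_nat_gt (1 / th)) as [N HN].
  assert (HNt : 1 <= INR N * th).
  { assert (1 = (1 / th) * th) by (field; lra). nra. }
  destruct (Z.lt_total l 0) as [Hneg|[Hpos|Hpos]].
  -
    set (z0 := (up u - 1)%Z).
    assert (Hz0 : IZR z0 <= u) by (unfold z0; rewrite minus_IZR; lra).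
    assert (Hz0' : u - 1 < IZR z0) by (unfold z0; rewrite minus_IZR; lra).
    destruct (step_down th (IZR z0) H1 N u) as [s Hs]; [lra|].
    set (p := Z.to_nat (- l)).
    assert (Hp : INR p = - IZR l) by (unfold p; rewrite INR_Z by lia; apply opp_IZR).
    exists (S s * p)%nat, (z0 + Z.of_nat (S s) * k)%Z.
    rewrite mult_INR, plus_IZR, mult_IZR, <- INR_IZR_INZ, Hp.
    unfold th in *. rewrite !S_INR in *.
    split; nra.
  - lia.
  - set (z0 := up u).
    destruct (step_up th (IZR z0) H1 N u) as [s Hs]; [unfold z0; lra|].
    set (p := Z.to_nat l).
    assert (Hp : INR p = IZR l) by (unfold p; rewrite INR_Z by lia; auto).
    exists (s * p)%nat, (z0 - Z.of_nat s * k)%Z.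
    rewrite mult_INR, minus_IZR, mult_IZR, <- INR_IZR_INZ, Hp.
    unfold th in *. rewrite !S_INR in *.
    split; nra.
Qed.

Lemma div_nonneg (x y : R) : 0 <= x -> 0 < y -> 0 <= x / y.
Proof. intros; unfold Rdiv; apply Rmult_le_pos; [auto| left; apply Rinv_0_lt_compat; auto]. Qed.

Lemma L1 A A' c c' : 0 < A ->
  (forall i j : nat, A * INR i + c < INR j -> A' * INR i + c' < INR j) -> A' <= A.
Proof.
  intros hA H. destruct (Rle_lt_dec A' A) as [|Hlt]; auto. exfalso.
  destruct (exists_nat_gt ((2 + Rabs c + Rabs c') / (A' - A) + Rabs c / A)) as [i Hi].
  assert (0 <= (2 + Rabs c + Rabs c') / (A' - A)).
  { apply div_nonneg; [pose proof (Rabs_pos c); pose proof (Rabs_pos c'); lra| lra]. }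
  assert (0 <= Rabs c / A) by (apply div_nonneg; [apply Rabs_pos| lra]).
  assert (E1 : (A' - A) * INR i > 2 + Rabs c + Rabs c').
  { assert (2 + Rabs c + Rabs c' = (A' - A) * ((2 + Rabs c + Rabs c') / (A' - A))) by (field; lra).
    nra. }
  assert (E2 : A * INR i > Rabs c).
  { assert (Rabs c = A * (Rabs c / A)) by (field; lra). nra. }
  pose proof (Rle_abs c). pose proof (Rle_abs (-c)). rewrite Rabs_Ropp in *.
  pose proof (Rle_abs c'). pose proof (Rle_abs (-c')). rewrite Rabs_Ropp in *.
  destruct (archimed (A * INR i + c)) as [a1 a2].
  assert (0 <= up (A * INR i + c))%Z by (apply le_IZR; lra).
  specialize (H i (Z.to_nat (up (A * INR i + c)))).
  rewrite INR_Z in H by auto.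
  assert (A' * INR i + c' < IZR (up (A * INR i + c))) by (apply H; lra).
  lra.
Qed.

Lemma L2 A c c' : 0 < A -> irrational A ->
  (forall i j : nat, A * INR i + c < INR j -> A * INR i + c' < INR j) -> c' <= c.
Proof.
  intros hA hirr H. destruct (Rle_lt_dec c' c) as [|Hlt]; auto. exfalso.
  destruct (exists_nat_gt (Rabs c / A)) as [N HN].
  assert (E2 : A * INR N > Rabs c).
  { assert (Rabs c = A * (Rabs c / A)) by (field; lra). nra. }
  pose proof (Rle_abs (-c)). rewrite Rabs_Ropp in *.
  destruct (dens A hirr (A * INR N + c) (c' - c)) as [i [z Hz]]; [lra|].
  pose proof (pos_INR i).
  assert (0 <= z)%Z by (apply le_IZR; nra).
  specialize (H (i + N)%nat (Z.to_nat z)).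
  rewrite INR_Z in H by auto. rewrite plus_INR in H.
  assert (A * (INR i + INR N) + c' < IZR z) by (apply H; nra).
  nra.
Qed.

Lemma order_det A A' c c' : 0 < A -> 0 < A' -> irrational A ->
  (forall i j : nat, A * INR i + c < INR j <-> A' * INR i + c' < INR j) ->
  A = A' /\ c = c'.
Proof.
  intros hA hA' hirr H.
  assert (A' <= A) by (apply (L1 A A' c c'); auto; intros; apply H; auto).
  assert (A <= A') by (apply (L1 A' A c' c); auto; intros; apply H; auto).
  assert (E : A = A') by lra. subst A'.
  split; auto.
  assert (c' <= c) by (apply (L2 A c c'); auto; intros; apply H; auto).
  assert (c <= c') by (apply (L2 A c' c); auto; intros; apply H; auto).
  lra.
Qed.

Lemma homeo_inj a b h g : homeo_at_infty a b h g ->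
  forall x y, a < x -> a < y -> h x = h y -> x = y.
Proof.
  intros [_ [_ [H3 _]]] x y hx hy E.
  rewrite <- (H3 x hx), <- (H3 y hy), E. reflexivity.
Qed.

Lemma lin_cont (p q t : R) : continuity_pt (fun t => (1 - t) * p + t * q) t.
Proof. reg. Qed.

Lemma conv_gt (a p x t : R) : a < p -> a < x -> 0 <= t <= 1 -> a < (1 - t) * p + t * x.
Proof.
  intros hp hx ht. destruct (Rlt_le_dec t 1).
  - assert (0 < (1 - t) * (p - a)) by (apply Rmult_lt_0_compat; lra).
    assert (0 <= t * (x - a)) by (apply Rmult_le_pos; lra). nra.
  - assert (t = 1) by lra. subst. lra.
Qed.

Lemma mono_core a h :
  (forall x y, a < x -> a < y -> h x = h y -> x = y) ->
  (forall x, a < x -> continuity_pt h x) ->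
  forall p q x y, a < p -> p < q -> a < x -> x < y -> h p < h q -> h x < h y.
Proof.
  intros Hinj Hc p q x y hp hpq hx hxy hh.
  destruct (Rtotal_order (h x) (h y)) as [|[E|Hgt]]; auto; exfalso.
  - apply Hinj in E; lra.
  - set (l1 := fun t => (1 - t) * p + t * x).
    set (l2 := fun t => (1 - t) * q + t * y).
    set (F := fun t => h (l1 t) - h (l2 t)).
    assert (Hcont : forall t, 0 <= t <= 1 -> continuity_pt F t).
    { intros t ht.
      assert (C1 : continuity_pt (comp h l1) t).
      { apply continuity_pt_comp. apply lin_cont. apply Hc. unfold l1. apply conv_gt; auto. }
      assert (C2 : continuity_pt (comp h l2) t).
      { apply continuity_pt_comp. apply lin_cont. apply Hc. unfold l2. apply conv_gt; auto; lra. }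
      exact (continuity_pt_minus _ _ t C1 C2). }
    destruct (IVT_interv F 0 1 Hcont) as [t [ht Ht]].
    + lra.
    + unfold F, l1, l2. replace ((1 - 0) * p + 0 * x) with p by ring.
      replace ((1 - 0) * q + 0 * y) with q by ring. lra.
    + unfold F, l1, l2. replace ((1 - 1) * p + 1 * x) with x by ring.
      replace ((1 - 1) * q + 1 * y) with y by ring. lra.
    + unfold F in Ht. assert (E : h (l1 t) = h (l2 t)) by lra.
      apply Hinj in E; unfold l1, l2 in *.
      * assert (0 < (1-t)*(q-p) + t*(y-x)) by (apply conv_gt; lra). nra.
      * apply conv_gt; auto.
      * apply conv_gt; auto; lra.
Qed.

Lemma mono a b h g : homeo_at_infty a b h g ->
  (forall x y, a < x -> x < y -> h x < h y) \/
  (forall x y, a < x -> x < y -> h y < h x).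
Proof.
  intro H.
  assert (Hinj := homeo_inj a b h g H).
  assert (Hc : forall x, a < x -> continuity_pt h x) by apply H.
  destruct (Rtotal_order (h (a+1)) (h (a+2))) as [L|[E|G]].
  - left. intros x y hx hxy. apply (mono_core a h Hinj Hc (a+1) (a+2)); auto; lra.
  - apply Hinj in E; lra.
  - right. intros x y hx hxy.
    assert (Hinj' : forall x y, a < x -> a < y -> - h x = - h y -> x = y).
    { intros; apply Hinj; auto; lra. }
    assert (Hc' : forall x, a < x -> continuity_pt (fun x => - h x) x).
    { intros z hz. apply continuity_pt_opp. apply Hc; auto. }
    assert (- h x < - h y).
    { apply (mono_core a (fun x => - h x) Hinj' Hc' (a+1) (a+2)); auto; lra. }
    lra.
Qed.

Lemma strict_rev a h (inc : forall x y, a < x -> x < y -> h x < h y) x y :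
  a < x -> a < y -> h x < h y -> x < y.
Proof.
  intros hx hy hh. destruct (Rtotal_order x y) as [|[E|G]]; auto.
  - subst; lra.
  - specialize (inc y x hy G); lra.
Qed.

Lemma xi_gt a al be n0 i : 0 < al -> a < al * INR n0 + be -> a < al * INR (n0 + i) + be.
Proof.
  intros hal h0. rewrite plus_INR. pose proof (pos_INR i). nra.
Qed.

Lemma xs_eq al be n0 i : al * INR (n0 + S i) + be = al * INR (n0 + i) + be + al.
Proof. rewrite <- plus_n_Sm, S_INR. ring. Qed.

Lemma enum al be al' be' a b h g (H : homeo_at_infty a b h g)
  (inc : forall x y, a < x -> x < y -> h x < h y)
  (HX : forall x, a < x -> (AP al be x <-> AP al' be' (h x)))
  (hal : 0 < al) (hal' : 0 < al') n0 :
  a < al * INR n0 + be ->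
  exists k0, forall i, h (al * INR (n0 + i) + be) = al' * INR (k0 + i) + be'.
Proof.
  intro h0.
  destruct (proj1 (HX _ h0) (ex_intro _ n0 eq_refl)) as [k0 Hk0].
  exists k0. induction i as [|i IH].
  - rewrite !Nat.add_0_r. auto.
  - assert (hi := xi_gt a al be n0 i hal h0).
    assert (hs := xi_gt a al be n0 (S i) hal h0).
    rewrite xs_eq in hs |- *.
    set (xi := al * INR (n0 + i) + be) in *.
    destruct (proj1 (HX _ hs) (ex_intro _ (n0 + S i)%nat (eq_sym (xs_eq al be n0 i)))) as [k Hk].
    assert (Hlt : h xi < h (xi + al)) by (apply inc; auto; lra).
    rewrite Hk, IH in Hlt.
    assert (Hk1 : (k0 + i < k)%nat).
    { apply INR_lt. apply Rmult_lt_reg_l with al'; auto. lra. }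
    destruct (Nat.eq_dec k (S (k0 + i))) as [E|NE].
    + rewrite Hk, E, <- plus_n_Sm. reflexivity.
    + exfalso.
      assert (Hk2 : (S (k0 + i) < k)%nat) by lia.
      set (y := al' * INR (S (k0 + i)) + be').
      destruct H as [H1 [H2 [H3 [H4 _]]]].
      assert (hby : b < y).
      { specialize (H1 xi hi). rewrite IH in H1. unfold y. rewrite S_INR. lra. }
      assert (hgy := H2 y hby).
      assert (Ay : AP al' be' (h (g y))) by (rewrite H4; auto; exists (S (k0 + i)); auto).
      apply (HX _ hgy) in Ay. destruct Ay as [m Hm].
      assert (L1 : xi < g y).
      { apply (strict_rev a h inc); auto. rewrite H4, IH; auto. unfold y.
        apply Rplus_lt_compat_r, Rmult_lt_compat_l; auto. apply lt_INR; lia. }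
      assert (L2 : g y < xi + al).
      { apply (strict_rev a h inc); auto. rewrite H4, Hk; auto. unfold y.
        apply Rplus_lt_compat_r, Rmult_lt_compat_l; auto. apply lt_INR; lia. }
      rewrite Hm in L1, L2. unfold xi in L1, L2.
      assert (INR (n0 + i) < INR m) by (apply Rmult_lt_reg_l with al; auto; lra).
      assert (INR m < INR (S (n0 + i))) by (rewrite S_INR; apply Rmult_lt_reg_l with al; auto; lra).
      apply INR_lt in H. apply INR_lt in H0. lia.
Qed.

Lemma dec_contra al be al' be' a b h g (H : homeo_at_infty a b h g)
  (dec : forall x y, a < x -> x < y -> h y < h x)
  (HX : forall x, a < x -> (AP al be x <-> AP al' be' (h x)))
  (hal : 0 < al) (hal' : 0 < al') n0 :
  a < al * INR n0 + be -> False.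
Proof.
  intro h0.
  assert (Hd : forall i, h (al * INR (n0 + i) + be) <= h (al * INR n0 + be) - INR i * al').
  { induction i as [|i IH].
    - rewrite Nat.add_0_r. simpl. lra.
    - assert (hi := xi_gt a al be n0 i hal h0).
      assert (hs := xi_gt a al be n0 (S i) hal h0).
      destruct (proj1 (HX _ hs) (ex_intro _ (n0 + S i)%nat eq_refl)) as [k1 Hk1].
      destruct (proj1 (HX _ hi) (ex_intro _ (n0 + i)%nat eq_refl)) as [k2 Hk2].
      rewrite xs_eq in hs, Hk1 |- *.
      assert (Hlt : h (al * INR (n0 + i) + be + al) < h (al * INR (n0 + i) + be))
        by (apply dec; auto; lra).
      rewrite Hk1, Hk2 in Hlt.
      assert (Hk : (k1 < k2)%nat).
      { apply INR_lt. apply Rmult_lt_reg_l with al'; auto. lra. }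
      assert (INR (S k1) <= INR k2) by (apply le_INR; lia).
      rewrite S_INR in H0. rewrite S_INR. nra. }
  destruct (exists_nat_gt ((h (al * INR n0 + be) - b) / al')) as [i Hi].
  specialize (Hd i).
  assert (h (al * INR n0 + be) - b < INR i * al').
  { assert (h (al * INR n0 + be) - b = ((h (al * INR n0 + be) - b) / al') * al') by (field; lra).
    nra. }
  destruct H as [H1 _].
  specialize (H1 _ (xi_gt a al be n0 i hal h0)). lra.
Qed.

Lemma arith_equiv al be de ga (n0 m0 i j : R) : 0 < ga ->
  (al / ga * i + ((al * n0 + be - de) / ga - m0) < j <->
   al * (n0 + i) + be < ga * (m0 + j) + de).
Proof.
  intro hga.
  assert (E : ga * (al / ga * i + ((al * n0 + be - de) / ga - m0))
              = al * (n0 + i) + be - de - ga * m0) by (field; lra).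
  split; intro Hl.
  - apply (Rmult_lt_compat_l ga) in Hl; auto. lra.
  - apply Rmult_lt_reg_l with ga; auto. lra.
Qed.

Lemma exists_start al be a : 0 < al -> exists n0 : nat, a < al * INR n0 + be.
Proof.
  intro hal. destruct (exists_nat_gt ((a - be) / al)) as [n Hn]. exists n.
  assert (a - be = ((a - be) / al) * al) by (field; lra). nra.
Qed.

Lemma forward (al be ga de al' be' ga' de' : R)
  (hal : 0 < al) (hga : 0 < ga) (hal' : 0 < al') (hga' : 0 < ga')
  (hirr : irrational (al / ga)) :
  top_equiv_at_infty (AP al be) (AP ga de) (AP al' be') (AP ga' de') ->
  (al / ga = al' / ga' /\
   cong_mod_1A (al / ga) ((be - de) / ga) ((be' - de') / ga')).
Proof.
  intros [a [b [h [g [Hh [HX HY]]]]]].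
  destruct (exists_start al be a hal) as [n0 Hn0].
  destruct (exists_start ga de a hga) as [m0 Hm0].
  destruct (mono a b h g Hh) as [inc|dec].
  2:{ exfalso. exact (dec_contra al be al' be' a b h g Hh dec HX hal hal' n0 Hn0). }
  destruct (enum al be al' be' a b h g Hh inc HX hal hal' n0 Hn0) as [k0 Hk0].
  destruct (enum ga de ga' de' a b h g Hh inc HY hga hga' m0 Hm0) as [l0 Hl0].
  assert (Hord : forall i j : nat,
    al / ga * INR i + ((al * INR n0 + be - de) / ga - INR m0) < INR j <->
    al' / ga' * INR i + ((al' * INR k0 + be' - de') / ga' - INR l0) < INR j).
  { intros i j. rewrite !arith_equiv by auto.
    rewrite <- !plus_INR.
    rewrite <- Hk0, <- Hl0.
    pose proof (xi_gt a al be n0 i hal Hn0).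
    pose proof (xi_gt a ga de m0 j hga Hm0).
    split; intro Hl.
    - apply inc; auto.
    - apply (strict_rev a h inc); auto. }
  assert (hA' : 0 < al' / ga') by (apply Rdiv_lt_0_compat; auto).
  assert (hA : 0 < al / ga) by (apply Rdiv_lt_0_compat; auto).
  destruct (order_det _ _ _ _ hA hA' hirr Hord) as [EA Ec].
  split; auto.
  exists (Z.of_nat m0 - Z.of_nat l0)%Z, (Z.of_nat k0 - Z.of_nat n0)%Z.
  rewrite !minus_IZR, <- !INR_IZR_INZ.
  assert (E1 : (al * INR n0 + be - de) / ga = al / ga * INR n0 + (be - de) / ga) by (field; lra).
  assert (E2 : (al' * INR k0 + be' - de') / ga' = al' / ga' * INR k0 + (be' - de') / ga') by (field; lra).
  rewrite E1, E2, <- EA in Ec.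
  nra.
Qed.

Lemma nat_of_Z (z : Z) (x : R) : 0 < IZR z + 1 -> x = IZR z ->
  exists n : nat, x = INR n.
Proof.
  intros hz ->. assert (0 <= z)%Z.
  { assert (-1 < z)%Z by (apply lt_IZR; lra). lia. }
  exists (Z.to_nat z). rewrite INR_Z; auto.
Qed.

Lemma backward (al be ga de al' be' ga' de' : R)
  (hal : 0 < al) (hga : 0 < ga) (hal' : 0 < al') (hga' : 0 < ga') :
  (al / ga = al' / ga' /\
   cong_mod_1A (al / ga) ((be - de) / ga) ((be' - de') / ga')) ->
  top_equiv_at_infty (AP al be) (AP ga de) (AP al' be') (AP ga' de').
Proof.
  intros [HA [K [L HKL]]].
  assert (Eal : al' = ga' * (al / ga)) by (rewrite HA; field; lra).
  assert (Ebe : be' = de' + ga' * ((be - de) / ga - IZR K - IZR L * (al / ga)))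
    by (assert (E0 : (be' - de') / ga' = (be - de) / ga - IZR K - IZR L * (al / ga)) by lra;
        rewrite <- E0; field; lra).
  set (h := fun x => ga' * ((x - de) / ga - IZR K) + de').
  set (g := fun y => ga * ((y - de') / ga' + IZR K) + de).
  set (a := Rabs be + Rabs de + al * Rabs (IZR L) + ga * Rabs (IZR K) + 1).
  pose proof (Rle_abs be). pose proof (Rle_abs (-be)). rewrite Rabs_Ropp in *.
  pose proof (Rle_abs de). pose proof (Rle_abs (-de)). rewrite Rabs_Ropp in *.
  pose proof (Rle_abs (IZR L)). pose proof (Rle_abs (- IZR L)). rewrite Rabs_Ropp in *.
  pose proof (Rle_abs (IZR K)). pose proof (Rle_abs (- IZR K)). rewrite Rabs_Ropp in *.
  pose proof (Rabs_pos (IZR L)). pose proof (Rabs_pos (IZR K)).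
  assert (0 <= al * Rabs (IZR L)) by (apply Rmult_le_pos; lra).
  assert (0 <= ga * Rabs (IZR K)) by (apply Rmult_le_pos; lra).
  exists a, (h a), h, g.
  split; [|split].
  - repeat split.
    + intros x hx. unfold h.
      assert (ga' * ((x - de) / ga) - ga' * ((a - de)/ga) = ga' / ga * (x - a)) by (field; lra).
      assert (0 < ga' / ga * (x - a)) by (apply Rmult_lt_0_compat; [apply Rdiv_lt_0_compat|]; lra).
      lra.
    + intros y hy. unfold g. unfold h in hy.
      assert (E : ga * ((y - de') / ga' + IZR K) + de - a = ga / ga' * (y - (ga' * ((a - de) / ga - IZR K) + de'))) by (field; lra).
      assert (0 < ga / ga' * (y - (ga' * ((a - de) / ga - IZR K) + de'))) by (apply Rmult_lt_0_compat; [apply Rdiv_lt_0_compat|]; lra).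
      lra.
    + intros x _. unfold g, h. field; lra.
    + intros y _. unfold g, h. field; lra.
    + intros x _. unfold h. reg.
    + intros y _. unfold g. reg.
  - intros x hx. split.
    + intros [n Hn].
      assert (Hn' : IZR L + INR n > 0).
      { assert (al * INR n > al * Rabs (IZR L)) by (unfold a in hx; lra).
        assert (INR n > Rabs (IZR L)) by (apply Rmult_lt_reg_l with al; auto). lra. }
      destruct (nat_of_Z (Z.of_nat n + L) (INR n + IZR L)) as [m Hm].
      { rewrite plus_IZR, <- INR_IZR_INZ. lra. }
      { rewrite plus_IZR, <- INR_IZR_INZ. lra. }
      exists m. rewrite <- Hm. unfold h. rewrite Hn, Eal, Ebe. field. lra.
    + intros [n Hn]. unfold h in Hn. rewrite Eal, Ebe in Hn.
      assert (E : (x - de) / ga = (al / ga) * INR n + (be - de) / ga - IZR L * (al / ga)).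
      { apply Rmult_eq_reg_l with ga'; [|lra]. lra. }
      assert (Ex : x = al * (INR n - IZR L) + be).
      { replace x with (ga * ((x - de) / ga) + de) by (field; lra). rewrite E. field. lra. }
      assert (Hp : 0 < INR n - IZR L).
      { assert (0 < al * (INR n - IZR L)) by (unfold a in hx; lra). nra. }
      destruct (nat_of_Z (Z.of_nat n - L) (INR n - IZR L)) as [m Hm].
      { rewrite minus_IZR, <- INR_IZR_INZ. lra. }
      { rewrite minus_IZR, <- INR_IZR_INZ. lra. }
      exists m. rewrite <- Hm. auto.
  - intros x hx. split.
    + intros [n Hn].
      assert (Hn' : INR n - IZR K > 0).
      { assert (ga * INR n > ga * Rabs (IZR K)) by (unfold a in hx; lra).
        assert (INR n > Rabs (IZR K)) by (apply Rmult_lt_reg_l with ga; auto). lra. }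
      destruct (nat_of_Z (Z.of_nat n - K) (INR n - IZR K)) as [m Hm].
      { rewrite minus_IZR, <- INR_IZR_INZ. lra. }
      { rewrite minus_IZR, <- INR_IZR_INZ. lra. }
      exists m. rewrite <- Hm. unfold h. rewrite Hn. field. lra.
    + intros [n Hn]. unfold h in Hn.
      assert (E : (x - de) / ga = INR n + IZR K).
      { apply Rmult_eq_reg_l with ga'; [|lra]. lra. }
      assert (Ex : x = ga * (INR n + IZR K) + de).
      { replace x with (ga * ((x - de) / ga) + de) by (field; lra). rewrite E. ring. }
      assert (Hp : 0 < INR n + IZR K).
      { assert (0 < ga * (INR n + IZR K)) by (unfold a in hx; lra). nra. }
      destruct (nat_of_Z (Z.of_nat n + K) (INR n + IZR K)) as [m Hm].
      { rewrite plus_IZR, <- INR_IZR_INZ. lra. }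
      { rewrite plus_IZR, <- INR_IZR_INZ. lra. }
      exists m. rewrite <- Hm. auto.
Qed.

Theorem lemma6 (al be ga de al' be' ga' de' : R)
  (hal : 0 < al) (hga : 0 < ga) (hal' : 0 < al') (hga' : 0 < ga')
  (hirr : irrational (al / ga)) (hirr' : irrational (al' / ga')) :
  top_equiv_at_infty (AP al be) (AP ga de) (AP al' be') (AP ga' de') <->
  (al / ga = al' / ga' /\
   cong_mod_1A (al / ga) ((be - de) / ga) ((be' - de') / ga')).
Proof.
  split.
  - apply forward; auto.
  - apply backward; auto.
Qed.
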